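(* Consider an iteration of the $(k,k-1)$-completion with current subgraph $H$, chosen pair $(x,y)$, chosen shortest path $P_{x,y}$, chosen minimal $k$-segmentation $\mathcal{S}$, and added edges $e_1,\ldots,e_t$ (the elements of $E_k(\mathcal{S},H)$). Let $a,b$ be vertices in $\bigcup_{i=1}^t V(e_i)$ and let $s,s'$ be their respective centers. If the pair $(s,s')$ is finalized in $H$, i.e. \[ \mathrm{dist}_H(s,s')\leq k\cdot\mathrm{dist}_G(s,s')-k^2W, \] then $a,b$ are the two endpoints of a segment of $\mathcal{S}$ that has stretch at most $k$ in $H$ (i.e. $\mathrm{dist}_H(a,b)\leq k\,\mathrm{dist}_G(a,b)$).
   Context: $G=(V,E,w)$ is an undirected graph with positive edge weights, in which every edge is a shortest path between its endpoints; $\mathrm{dist}_X$ is the weighted shortest-path distance in a graph $X$, and $W=W_{\max}(G)$ is the maximum edge weight. $k\geq3$ is odd and $R=(k-1)/2$. For a shortest path $P_{x,y}=(x_0,\ldots,x_t)$ in $G$ and $H\subseteq G$, a $k$-segmentation is a sequence of index intervals $([i_0,i_1],\ldots,[i_{s-1},i_s])$ with $0=i_0<\cdots<i_s=t$ such that every segment with $i_j-i_{j-1}\geq2$ satisfies $\mathrm{dist}_H(x_{i_{j-1}},x_{i_j})\leq k\,\mathrm{dist}_G(x_{i_{j-1}},x_{i_j})$; it is minimal if no consecutive sequence of segments can be merged to give another $k$-segmentation. $E_k(\mathcal{S},H)$ is the set of edges $e=\{u,v\}$ forming length-one segments of $\mathcal{S}$ with $\mathrm{dist}_H(u,v)>k\,w(e)$.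 The $(k,k-1)$-completion starts from $H\gets H_0$, where $H_0$ is the $(2k-1)$-spanner output by the Baswana–Sen clustering algorithm with parameter $k$ (with sampled center sets $V=S_0\supseteq S_1\supseteq\cdots$), and, while some pair $x,y$ has $\mathrm{dist}_H(x,y)>k\,\mathrm{dist}_G(x,y)+(k-1)W$, picks such a pair, a shortest path $P_{x,y}$, a minimal $k$-segmentation $\mathcal{S}$ w.r.t. the current $H$, and sets $H\gets H\cup E_k(\mathcal{S},H)$. For an endpoint $a$ of an edge $e\in E_k(\mathcal{S},H)$, its center is its Baswana–Sen cluster center $s_a$ in the level-$R$ center set $S_R$; by the Baswana–Sen clustering invariant it satisfies $\mathrm{dist}_H(a,s_a)\leq R\cdot w(e)$. *)

(* Defs.v *)
From HB Require Import structures.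
From mathcomp Require Import all_boot all_order all_algebra.
From mathcomp Require Import boolp classical_sets reals constructive_ereal ereal.

Set Implicit Arguments.
Unset Strict Implicit.
Unset Printing Implicit Defensive.

Import Order.TTheory GRing.Theory Num.Theory.
Local Open Scope ring_scope.
Local Open Scope classical_set_scope.

Section Graphs.
Variables (R : realType) (T : finType).

Fixpoint walk_weight (w : T -> T -> R) (u : T) (p : seq T) : R :=
  match p with
  | [::] => 0
  | v :: p' => w u v + walk_weight w v p'
  end.

Definition dist (X : rel T) (w : T -> T -> R) (u v : T) : \bar R :=
  ereal_inf [set (walk_weight w u p)%:E | p in
              [set p : seq T | path X u p /\ last u p = v]].

Definition Wmax (X : rel T) (w : T -> T -> R) : R :=
  \big[Num.max/0]_(e : T * T | X e.1 e.2) w e.1 e.2.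

(* The path P = (x_0, ..., x_t) is represented as x :: p, so t = size p and
   x_i = nth x (x :: p) i. *)
Definition pnode (x : T) (p : seq T) (i : nat) : T := nth x (x :: p) i.

Definition is_kseg (k : nat) (E H : rel T) (w : T -> T -> R)
    (x : T) (p : seq T) (I : seq nat) : Prop :=
  [/\ sorted ltn I, head 1%N I = 0%N, last 0%N I = size p &
      forall j, (0 < j < size I)%N ->
        (2 <= nth 0%N I j - nth 0%N I j.-1)%N ->
        (dist H w (pnode x p (nth 0%N I j.-1)) (pnode x p (nth 0%N I j))
          <= (k%:R)%:E * dist E w (pnode x p (nth 0%N I j.-1)) (pnode x p (nth 0%N I j)))%E].

(* Minimal: no run of consecutive segments (segments number q0+1 .. q, with
   q - q0 >= 2, i.e. at least two segments) can be merged into one segment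
   so as to give another k-segmentation. *)
Definition is_min_kseg (k : nat) (E H : rel T) (w : T -> T -> R)
    (x : T) (p : seq T) (I : seq nat) : Prop :=
  is_kseg k E H w x p I /\
  forall q0 q, (q0.+1 < q)%N -> (q < size I)%N ->
    ~ is_kseg k E H w x p (take q0.+1 I ++ drop q I).

Definition is_segment_pair (x : T) (p : seq T) (I : seq nat) (j : nat)
    (u v : T) : Prop :=
  (0 < j < size I)%N /\
  ((u = pnode x p (nth 0%N I j.-1) /\ v = pnode x p (nth 0%N I j)) \/
   (v = pnode x p (nth 0%N I j.-1) /\ u = pnode x p (nth 0%N I j))).

Definition in_Ek (k : nat) (H : rel T) (w : T -> T -> R)
    (x : T) (p : seq T) (I : seq nat) (u v : T) : Prop :=
  exists j, [/\ is_segment_pair x p I j u v,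
               (nth 0%N I j - nth 0%N I j.-1)%N = 1%N &
               (dist H w u v > (k%:R * w u v)%:E)%E].

End Graphs.

(* Main.v *)
Require Import Defs.
From HB Require Import structures.
From mathcomp Require Import all_boot all_order all_algebra.
From mathcomp Require Import boolp classical_sets reals constructive_ereal ereal.
From mathcomp Require Import ring lra zify.
Import Order.TTheory GRing.Theory Num.Theory.
Local Open Scope ring_scope.

Section Helpers.
Context {R : realType} {T : finType}.
Implicit Types (X : rel T) (w f g : T -> T -> R) (u v m : T) (p q : seq T).

Lemma walk_weight_cat w u p1 p2 :
  walk_weight w u (p1 ++ p2) = walk_weight w u p1 + walk_weight w (last u p1) p2.
Proof. by elim: p1 u => [|z p1 IH] u /=; rewrite ?add0r // IH addrA. Qed.

Lemma dist_le {X} w {u p} : path X u p ->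
  (dist X w u (last u p) <= (walk_weight w u p)%:E)%E.
Proof. by move=> Hp; apply: ereal_inf_lbound; exists p. Qed.

Lemma walk_weight_ge0 {X w u p} : (forall a b, X a b -> 0 <= w a b) ->
  path X u p -> 0 <= walk_weight w u p.
Proof.
move=> Hw; elim: p u => [|z p IH] u //= /andP[Huz Hp].
by rewrite addr_ge0 ?Hw ?IH.
Qed.

Lemma dist_ge0 {X w} u v : (forall a b, X a b -> 0 <= w a b) ->
  (0 <= dist X w u v)%E.
Proof.
move=> Hw; apply/ereal_infP => _ [q [Hq _] <-].
by rewrite lee_fin (walk_weight_ge0 Hw Hq).
Qed.

Lemma dist_tri X w u m v : (forall a b, X a b -> 0 <= w a b) ->
  (dist X w u v <= dist X w u m + dist X w m v)%E.
Proof.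
move=> Hw.
case Hmv: (dist X w m v) => [r| |].
- rewrite -leeBlDr //; apply/ereal_infP => _ [q1 [Hq1 Hl1] <-].
  rewrite leeBlDr // -leeBlDl // -Hmv.
  apply/ereal_infP => _ [q2 [Hq2 Hl2] <-].
  rewrite leeBlDl // -EFinD -Hl1 -walk_weight_cat.
  have := @dist_le X w u (q1 ++ q2).
  by rewrite cat_path Hq1 Hl1 Hq2 last_cat Hl1 Hl2; apply.
- rewrite addey ?leey //.
  by have := dist_ge0 u m Hw; case: (dist X w u m).
- by have := dist_ge0 m v Hw; rewrite Hmv.
Qed.

Lemma dist_sub X X' w u v : (forall a b, X a b -> X' a b) ->
  (dist X' w u v <= dist X w u v)%E.
Proof.
move=> HX; apply/ereal_infP => _ [q [Hq Hl] <-]; rewrite -Hl.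
by apply: dist_le; apply: sub_path Hq => a b /HX.
Qed.

Lemma last_rev_belast u p : last (last u p) (rev (belast u p)) = u.
Proof.
elim: p u => [|z p IH] u //=.
by rewrite rev_cons last_rcons.
Qed.

Lemma walk_weight_rcons w u p z :
  walk_weight w u (rcons p z) = walk_weight w u p + w (last u p) z.
Proof. by rewrite -cats1 walk_weight_cat /= addr0. Qed.

Lemma walk_weight_rev w u p :
  walk_weight (fun a b => w b a) (last u p) (rev (belast u p)) = walk_weight w u p.
Proof.
elim: p u => [|z p IH] u //=.
by rewrite rev_cons walk_weight_rcons IH last_rev_belast addrC.
Qed.

Lemma walk_weight_eq_path X f g u p : path X u p ->
  (forall a b, X a b -> f a b = g a b) -> walk_weight f u p = walk_weight g u p.
Proof.
move=> Hp Hfg; elim: p u Hp => [|z p IH] u //= /andP[Huz Hp].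
by rewrite Hfg // IH.
Qed.

Lemma dist_sym_le X w u v : symmetric X -> (forall a b, X a b -> w a b = w b a) ->
  (dist X w u v <= dist X w v u)%E.
Proof.
move=> HX Hw; apply/ereal_infP => _ [q [Hq Hl] <-].
have Hr : path X (last v q) (rev (belast v q)).
  by rewrite rev_path (eq_path (e' := X)) // => a b; rewrite HX.
have := dist_le w Hr.
rewrite (@walk_weight_eq_path X w (fun a b => w b a) _ _ Hr); last first.
  by move=> a b /Hw.
rewrite walk_weight_rev last_rev_belast Hl; apply.
Qed.

Lemma dist_sym X w u v : symmetric X -> (forall a b, X a b -> w a b = w b a) ->
  dist X w u v = dist X w v u.
Proof. by move=> HX Hw; apply/le_anti; rewrite !dist_sym_le. Qed.


Lemma nth_le_last {I : seq nat} {j} : sorted ltn I -> (j < size I)%N ->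
  (nth 0%N I j <= last 0%N I)%N.
Proof.
move=> Hs Hj; rewrite -nth_last.
have [Heq|Hlt] := eqVneq j (size I).-1; first by rewrite Heq.
apply: ltnW; apply: (sorted_ltn_nth ltn_trans) => //; rewrite ?inE /=; lia.
Qed.

Lemma seg_edge {E : rel T} {x p} {I : seq nat} {j u v} :
  sorted ltn I -> last 0%N I = size p -> path E x p -> symmetric E ->
  is_segment_pair x p I j u v -> (nth 0%N I j - nth 0%N I j.-1)%N = 1%N -> E u v.
Proof.
move=> Hs Hl Hp HE [/andP[Hj0 Hj] Huv] Hd.
have Hle := nth_le_last Hs Hj; rewrite Hl in Hle.
set i := nth 0%N I j.-1 in Hd Huv.
have Hi : nth 0%N I j = i.+1 by lia.
have Hip : (i < size p)%N by lia.
have := (pathP x Hp) i Hip.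
have -> : nth x p i = pnode x p (nth 0%N I j) by rewrite Hi.
have -> : nth x (x :: p) i = pnode x p i by [].
by case: Huv => [[-> ->]|[-> ->]] // => H; rewrite HE.
Qed.

Lemma seg_mem {x : T} {p} {I : seq nat} {j u v} : is_segment_pair x p I j u v ->
  exists2 al, (al < size I)%N & u = pnode x p (nth 0%N I al).
Proof.
move=> [/andP[Hj0 Hj] [[-> _]|[_ ->]]].
- by exists j.-1 => //; lia.
- by exists j.
Qed.

Lemma Wmax_ge {E : rel T} {w : T -> T -> R} {u v} : E u v -> w u v <= Wmax E w.
Proof.
move=> Huv; rewrite /Wmax.
exact: (le_bigmax_cond _ (j := (u, v)) (P := fun e => E e.1 e.2) (fun e => w e.1 e.2)).
Qed.

Lemma merge_kseg {k} {E H : rel T} {w : T -> T -> R} {x p} {I : seq nat} {al be} :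
  is_kseg k E H w x p I -> (al.+1 < be)%N -> (be < size I)%N ->
  (dist H w (pnode x p (nth 0%N I al)) (pnode x p (nth 0%N I be))
     <= (k%:R)%:E * dist E w (pnode x p (nth 0%N I al)) (pnode x p (nth 0%N I be)))%E ->
  is_kseg k E H w x p (take al.+1 I ++ drop be I).
Proof.
move=> [Hs Hh Hl Hseg] Hab Hb Hd.
have Hsz : size (take al.+1 I) = al.+1 by rewrite size_takel //; lia.
have Hn : forall j, nth 0%N (take al.+1 I ++ drop be I) j =
    nth 0%N I (if (j < al.+1)%N then j else (be + (j - al.+1))%N).
  move=> j; rewrite nth_cat Hsz; case: ifP => Hj; first by rewrite nth_take.
  by rewrite nth_drop.
split.
- apply: (subseq_sorted ltn_trans _ Hs).
  rewrite -{3}(cat_take_drop be I); apply: cat_subseq => //.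
  rewrite -[X in subseq _ X](cat_take_drop al.+1 (take be I)) take_takel; last by lia.
  exact: prefix_subseq.
- by move: Hb Hh; case: (I) => //= i0 I0 _ ->.
- rewrite last_cat -Hl -{3}(cat_take_drop be I) last_cat.
  case Hd': (drop be I) => [|z r]; last by [].
  by move: (size_drop be I); rewrite Hd' /=; lia.
- rewrite size_cat Hsz size_drop => j /andP[Hj0 Hj].
  rewrite !Hn.
  have [Hja|Hja] := ltnP j al.+1.
  + have -> : (j.-1 < al.+1)%N by lia.
    by apply: Hseg; lia.
  have [Heq|Hne] := eqVneq j al.+1.
  + subst j; rewrite /= ltnSn subnn addn0 => _; exact: Hd.
  + have -> : (j.-1 < al.+1)%N = false by lia.
    have -> : (be + (j.-1 - al.+1))%N = (be + (j - al.+1)).-1 by lia.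
    by apply: Hseg; lia.
Qed.


Lemma fin_le {d : \bar R} {r} : (0 <= d)%E -> (d <= r%:E)%E ->
  exists x, d = x%:E /\ 0 <= x /\ x <= r.
Proof. by case: d => // x; rewrite !lee_fin => H0 H1; exists x. Qed.

End Helpers.

Theorem lemma4p10 (R : realType) (T : finType)
    (E : rel T) (w : T -> T -> R) (H : rel T) (k : nat)
    (x y : T) (p : seq T) (I : seq nat) (a b s s' : T) :
  (* G = (T, E, w): undirected simple graph, positive weights,
     every edge is a shortest path between its endpoints *)
  symmetric E -> irreflexive E ->
  (forall u v, E u v -> w u v = w v u) ->
  (forall u v, E u v -> 0 < w u v) ->
  (forall u v, E u v -> dist E w u v = (w u v)%:E) ->
  (* H is the current subgraph of G *)
  symmetric H -> (forall u v, H u v -> E u v) ->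
  (* k >= 3 odd *)
  (3 <= k)%N -> odd k ->
  (* the pair (x, y) chosen by the completion step *)
  (dist H w x y > (k%:R)%:E * dist E w x y + ((k.-1)%:R * Wmax E w)%:E)%E ->
  (* P_{x,y} = x :: p is a shortest path in G from x to y *)
  path E x p -> last x p = y -> (walk_weight w x p)%:E = dist E w x y ->
  (* S = I is a minimal k-segmentation of P w.r.t. H *)
  is_min_kseg k E H w x p I ->
  (* a, b are endpoints of added edges, s, s' their centers, satisfying the
     Baswana-Sen clustering invariant dist_H(a, s_a) <= R * w(e) *)
  (exists v, in_Ek k H w x p I a v) ->
  (exists v, in_Ek k H w x p I b v) ->
  (forall v, in_Ek k H w x p I a v ->
     (dist H w a s <= (((k.-1)./2)%:R * w a v)%:E)%E) ->
  (forall v, in_Ek k H w x p I b v ->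
     (dist H w b s' <= (((k.-1)./2)%:R * w b v)%:E)%E) ->
  (* (s, s') is finalized in H *)
  (dist H w s s' <= (k%:R)%:E * dist E w s s' - ((k ^ 2)%:R * Wmax E w)%:E)%E ->
  exists j, is_segment_pair x p I j a b /\
            (dist H w a b <= (k%:R)%:E * dist E w a b)%E.
Proof.
move=> HEs HEirr HwE Hwpos HdE HHs HHE Hk3 Hodd Hxy Hp Hlast Hwp [Hkseg Hmin]
  [va Hava] [vb Hbvb] Has Hbs Hss.
have Hkseg' := Hkseg; case: Hkseg' => [Hs Hh Hl Hseg].
set W := Wmax E w in Hxy Hss *.
have HnnE : forall u v, E u v -> 0 <= w u v by move=> u v /Hwpos /ltW.
have HnnH : forall u v, H u v -> 0 <= w u v by move=> u v /HHE /HnnE.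
have HwH : forall u v, H u v -> w u v = w v u by move=> u v /HHE /HwE.
have Hsub : forall u v, H u v -> E u v by [].
move: (Hava) => [ja [Hsega Hdiffa _]].
move: (Hbvb) => [jb [Hsegb Hdiffb _]].
have EA := seg_edge Hs Hl Hp HEs Hsega Hdiffa.
have EB := seg_edge Hs Hl Hp HEs Hsegb Hdiffb.
have [al Hal Ha] := seg_mem Hsega.
have [be Hbe Hb] := seg_mem Hsegb.
have Has' := Has va Hava; have Hbs' := Hbs vb Hbvb.
set wa := w a va in Has'; set wb := w b vb in Hbs'.
have wa0 : 0 < wa := Hwpos _ _ EA.
have wb0 : 0 < wb := Hwpos _ _ EB.
have waW : wa <= W := Wmax_ge EA.
have wbW : wb <= W := Wmax_ge EB.
have [m Hm] : exists m, k = m.*2.+1.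
  by exists k./2; rewrite -[k in LHS]odd_double_half Hodd add1n.
have Hm2 : ((k.-1)./2 = m)%N by rewrite Hm /= half_double.
rewrite Hm2 in Has' Hbs'.
set r : R := m%:R in Has' Hbs'.
have HK : (k%:R : R) = 2 * r + 1.
  by rewrite Hm -addn1 -muln2 natrD natrM mulrC /r.
have Hm1 : (0 < m)%N by move: Hk3; rewrite Hm; case: (m).
have Hr1 : 1 <= r by rewrite /r ler1n.
set K : R := k%:R in Hxy Hss HK *.
have HK2 : ((k ^ 2)%:R : R) = K ^+ 2 by rewrite natrX.
rewrite HK2 in Hss.
have Hkey :
  dist E w a b = +oo%E \/ exists h e, [/\ dist H w a b = h%:E,
     dist E w a b = e%:E & h <= K * e - W].
  case HdEab: (dist E w a b) => [e| |]; [right|by left|].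
  2: by have := dist_ge0 a b HnnE; rewrite HdEab.
  have [xa [Hxa [xa0 xar]]] := fin_le (dist_ge0 a s HnnH) Has'.
  have [xb [Hxb [xb0 xbr]]] := fin_le (dist_ge0 b s' HnnH) Hbs'.
  have Hxa' : dist H w s a = xa%:E by rewrite dist_sym.
  have Hxb' : dist H w s' b = xb%:E by rewrite dist_sym.
  have [ya [Hya [ya0 yax]]] : exists y, dist E w s a = y%:E /\ 0 <= y /\ y <= xa.
    by apply: fin_le; [exact: dist_ge0|rewrite -Hxa' dist_sub].
  have [yb [Hyb [yb0 ybx]]] : exists y, dist E w b s' = y%:E /\ 0 <= y /\ y <= xb.
    by apply: fin_le; [exact: dist_ge0|rewrite -Hxb dist_sub].
  have [t [Ht [t0 tle]]] : exists y, dist E w a s' = y%:E /\ 0 <= y /\ y <= e + yb.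
    apply: fin_le; first exact: dist_ge0.
    by rewrite EFinD -HdEab -Hyb dist_tri.
  have [z [Hz [z0 zle]]] : exists y, dist E w s s' = y%:E /\ 0 <= y /\ y <= ya + t.
    apply: fin_le; first exact: dist_ge0.
    by rewrite EFinD -Hya -Ht dist_tri.
  have [hs [Hhs [hs0 hsle]]] : exists y, dist H w s s' = y%:E /\ 0 <= y /\
      y <= K * z - K ^+ 2 * W.
    apply: fin_le; first exact: dist_ge0.
    by rewrite EFinB EFinM -Hz.
  have [t2 [Ht2 [t20 t2le]]] : exists y, dist H w a s' = y%:E /\ 0 <= y /\ y <= xa + hs.
    apply: fin_le; first exact: dist_ge0.
    by rewrite EFinD -Hxa -Hhs dist_tri.
  have [h [Hh' [h0 hle]]] : exists y, dist H w a b = y%:E /\ 0 <= y /\ y <= t2 + xb.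
    apply: fin_le; first exact: dist_ge0.
    by rewrite EFinD -Ht2 -Hxb' dist_tri.
  exists h, e; split => //.
  have K0 : 0 <= K by rewrite HK; lra.
  have e0 : 0 <= e by have := dist_ge0 a b HnnE; rewrite HdEab lee_fin.
  have H1 : K * z <= K * (xa + e + xb) by apply: ler_wpM2l => //; lra.
  have H2 : r * wa <= r * W by apply: ler_wpM2l => //; lra.
  have H3 : r * wb <= r * W by apply: ler_wpM2l => //; lra.
  have H4 : (K + 1) * (xa + xb) <= (K + 1) * (r * (2 * W)).
    by apply: ler_wpM2l; lra.
  have H5 : K * z - K ^+ 2 * W <= K * (xa + e + xb) - K ^+ 2 * W by lra.
  have H6 : (K + 1) * (r * (2 * W)) - K ^+ 2 * W = - W.
    by rewrite HK; ring.
  have H7 : h <= xa + xb + K * (xa + e + xb) - K ^+ 2 * W by lra.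
  have H8 : K * (xa + e + xb) = K * xa + K * e + K * xb by ring.
  have H9 : (K + 1) * (xa + xb) = K * xa + K * xb + xa + xb by ring.
  lra.
have K0 : 0 < K by rewrite HK; lra.
have W0 : 0 < W by lra.
have Hab : (dist H w a b <= K%:E * dist E w a b)%E.
  case: Hkey => [->|[h [e [-> -> Hhe]]]].
    by rewrite mulry gtr0_sg // mul1e leey.
  by rewrite -EFinM lee_fin; lra.
have Hba : (dist H w b a <= K%:E * dist E w b a)%E.
  by rewrite (dist_sym H w b a) // (dist_sym E w b a).
have Hneq : a <> b.
  move=> Eab; rewrite -Eab in Hkey.
  have Hle : (dist E w a a <= 0%:E)%E by exact: (dist_le w (p := [::])).
  case: Hkey => [Hinf|[h [e [Hh1 He1 Hhe]]]].
    by rewrite Hinf in Hle.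
  have h0 : 0 <= h by have := dist_ge0 a a HnnH; rewrite Hh1 lee_fin.
  have e0 : e <= 0 by move: Hle; rewrite He1 lee_fin.
  have : K * e <= 0 by rewrite pmulr_rle0.
  lra.
have [Hlt|Hgt|Heq] := ltngtP al be.
- have [Hbe1|Hbe1] := eqVneq be al.+1.
  + exists be; split => //; split; first by rewrite Hbe andbT (leq_ltn_trans (leq0n al) Hlt).
    by left; split; [rewrite Hbe1 | exact: Hb].
  + have Hlt' : (al.+1 < be)%N by rewrite ltn_neqAle eq_sym Hbe1 Hlt.
    exfalso; apply: (Hmin al be Hlt' Hbe).
    by apply: merge_kseg => //; rewrite -Ha -Hb.
- have [Hal1|Hal1] := eqVneq al be.+1.
  + exists al; split => //; split; first by rewrite Hal andbT (leq_ltn_trans (leq0n be) Hgt).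
    by right; split; [rewrite Hal1 | exact: Ha].
  + have Hgt' : (be.+1 < al)%N by rewrite ltn_neqAle eq_sym Hal1 Hgt.
    exfalso; apply: (Hmin be al Hgt' Hal).
    by apply: merge_kseg => //; rewrite -Ha -Hb.
- by exfalso; apply: Hneq; rewrite Ha Hb Heq.
Qed.
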